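(* Let $H$ be a graph and let $A, B \subseteq V(H)$ be disjoint such that $(H,A,B)$ has property $\mathcal{P}$. Let $H^*\coloneqq H - E_H(A,B)$, $A' \coloneqq \{x \in A \colon d_{H}(x) \geq 4\}$ and $B' \coloneqq N_H(A \setminus A')$. Then $S(H) = (S(H^* ) \setminus B') \cup A'$, $P(H) = P(H^* ) \cup B'$, and $R(H) = R(H^* ) \setminus A'$.
   Context: For a graph $G$ and $X\subseteq V(G)$, $N_G(X)=\{x\in V(G)\setminus X: xy\in E(G)\text{ for some }y\in X\}$, $N_G(x)=N_G(\{x\})$, $d_G(x)$ is the degree, $\mathrm{dist}_G$ is graph distance; $E_G(X)$ is the set of edges inside $X$, $E_G(X,Y)$ the set of edges with one endpoint in $X$ and the other in $Y$, and $G-E'$ deletes the edge set $E'$. The strong $4$-core $S(G)$ is the maximal $X\subseteq V(G)$ with $|N_G(x)\cap X|\geq 4$ for all $x\in X\cup N_G(X)$; $P(G)=N_G(S(G))$ and $R(G)=V(G)\setminus(S(G)\cup P(G))$. A set $B$ has the robust sapphire property for $G$ if (RS1) every $x\in B\cup N_G(B)$ satisfies $\{x\}\cup N_G(x)\subseteq S(G)$ and $d_G(x)\ge5$, and (RS2) distinct $b_1,b_2\in B$ satisfy $\mathrm{dist}_G(b_1,b_2)\ge5$. For a graph $H$ and disjoint $A,B\subseteq V(H)$, with $H^*=H-E_H(A,B)$, $(H,A,B)$ has property $\mathcal{P}$ if: (P1) $E_H(A)=E_H(B)=\varnothing$; (P2) $H[A\cup B]$ is a union of stars and $|N_H(b)\cap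 A|\le 1$ for each $b\in B$; (P3) every vertex of $A$ is isolated in $H^*$; (P4) $B$ has the robust sapphire property for $H^*$. *)

(* Defs.v *)
From mathcomp Require Import all_boot.
Set Implicit Arguments. Unset Strict Implicit. Unset Printing Implicit Defensive.

Section Graphs.
Variable T : finType.

Definition simple_graph (e : rel T) : Prop := symmetric e /\ irreflexive e.

Definition nbhs (e : rel T) (X : {set T}) : {set T} :=
  [set x | (x \notin X) && [exists y in X, e x y]].

Definition nbh (e : rel T) (x : T) : {set T} := nbhs e [set x].

Definition deg (e : rel T) (x : T) : nat := #|nbh e x|.

(* dist_G(x,y) >= k : every walk from x to y has length at least k
   (distance +infinity if there is no such walk). *)
Definition dist_ge (e : rel T) (x y : T) (k : nat) : Prop :=
  forall p : seq T, path e x p -> last x p = y -> k <= size p.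

Definition edge_between (X Y : {set T}) (x y : T) : bool :=
  ((x \in X) && (y \in Y)) || ((x \in Y) && (y \in X)).

Definition del_edges (e : rel T) (X Y : {set T}) : rel T :=
  fun x y => e x y && ~~ edge_between X Y x y.

Definition core4_ok (e : rel T) (X : {set T}) : bool :=
  [forall x in X :|: nbhs e X, 4 <= #|nbh e x :&: X|].

(* S(G): the maximal such X (the union of all of them; the family is
   closed under union, so this is its largest member) *)
Definition S4 (e : rel T) : {set T} := \bigcup_(X | core4_ok e X) X.
Definition P4 (e : rel T) : {set T} := nbhs e (S4 e).
Definition R4 (e : rel T) : {set T} := ~: (S4 e :|: P4 e).

Definition robust_sapphire (e : rel T) (B : {set T}) : Prop :=
  (forall x, x \in B :|: nbhs e B ->
     (x |: nbh e x) \subset S4 e /\ 5 <= deg e x) /\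
  (forall b1 b2, b1 \in B -> b2 \in B -> b1 != b2 -> dist_ge e b1 b2 5).

Definition induced (e : rel T) (U : {set T}) : rel T :=
  fun x y => [&& x \in U, y \in U & e x y].

(* G[U] is a union of stars: every connected component C of G[U] contains
   a centre c such that every edge of G[U] inside C is incident to c
   (a single vertex counts as a trivial star K_{1,0}). *)
Definition union_of_stars (e : rel T) (U : {set T}) : Prop :=
  forall x, x \in U ->
    let C := [set y | connect (induced e U) x y] in
    exists2 c, c \in C &
      forall y z, y \in C -> z \in C -> induced e U y z -> (y == c) || (z == c).

Definition propP (e : rel T) (A B : {set T}) : Prop :=
  let Hs := del_edges e A B in
  [/\ (forall x y, x \in A -> y \in A -> ~~ e x y) /\
      (forall x y, x \in B -> y \in B -> ~~ e x y),
      union_of_stars e (A :|: B) /\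
      (forall b, b \in B -> #|nbh e b :&: A| <= 1),
      (forall a y, a \in A -> ~~ Hs a y)
    & robust_sapphire Hs B].

End Graphs.

(* Main.v *)
Require Import Defs.
From mathcomp Require Import all_boot zify.
Set Implicit Arguments. Unset Strict Implicit. Unset Printing Implicit Defensive.

Lemma in_nbhs (T : finType) (e : rel T) X x :
  (x \in nbhs e X) = (x \notin X) && [exists y in X, e x y].
Proof. by rewrite /nbhs inE. Qed.

Lemma in_nbh (T : finType) (e : rel T) x y :
  (y \in nbh e x) = (y != x) && e y x.
Proof.
rewrite /nbh in_nbhs in_set1; congr andb; apply/existsP/idP.
  by case=> z /andP[/set1P -> ].
by move=> H; exists x; rewrite set11 H.
Qed.

Lemma sub_S4 (T : finType) (e : rel T) X : core4_ok e X -> X \subset S4 e.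
Proof. by move=> H; apply: (bigcup_sup X H). Qed.

Lemma core_S4 (T : finType) (e : rel T) : core4_ok e (S4 e).
Proof.
apply/forall_inP => x /setUP [].
  case/bigcupP => X HX xX.
  have := forall_inP HX x; rewrite inE xX => /(_ isT) H.
  apply: (leq_trans H); apply/subset_leq_card/setIS/sub_S4/HX.
rewrite in_nbhs => /andP[xS /exists_inP[y /bigcupP[X HX yX] exy]].
have xX : x \notin X by apply: contra xS => xX; apply/bigcupP; exists X.
have := forall_inP HX x; rewrite inE in_nbhs xX /=.
have -> : [exists y0 in X, e x y0] by apply/exists_inP; exists y.
rewrite orbT => /(_ isT) H; apply: (leq_trans H); apply/subset_leq_card/setIS/sub_S4/HX.
Qed.

Lemma core_at (T : finType) (e : rel T) x :
  x \in S4 e :|: nbhs e (S4 e) -> 4 <= #|nbh e x :&: S4 e|.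
Proof. by move=> H; exact: (forall_inP (core_S4 e) x H). Qed.

Lemma setR_aux (T : finType) (S P A' B' : {set T}) : B' \subset S ->
  ~: (((S :\: B') :|: A') :|: (P :|: B')) = ~: (S :|: P) :\: A'.
Proof.
move=> /subsetP H; apply/setP => x; rewrite !inE.
have := H x; case: (x \in B'); case: (x \in S); case: (x \in A'); case: (x \in P) => //=; by move=> /(_ isT).
Qed.

Theorem proposition6p6 (T : finType) (e : rel T) (A B : {set T}) :
  simple_graph e ->
  [disjoint A & B] ->
  propP e A B ->
  let Hs := del_edges e A B in
  let A' := [set x in A | 4 <= deg e x] in
  let B' := nbhs e (A :\: A') in
  [/\ S4 e = (S4 Hs :\: B') :|: A',
      P4 e = P4 Hs :|: B'
    & R4 e = R4 Hs :\: A'].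
Proof.
move=> [esym eirr] dAB HP Hs A' B'.
case: HP => -[Aind Bind] [_ B1] Aiso [RS1 RS2].
move: RS1 RS2 Aiso; rewrite -/Hs => RS1 RS2 Aiso.
have nAB x : x \in A -> x \in B = false by move=> xA; exact: (disjointFr dAB xA).
have hE x y : Hs x y -> e x y by case/andP.
have hsym x y : Hs x y = Hs y x.
  rewrite /Hs /del_edges /edge_between esym.
  by case: (x \in A); case: (y \in A); case: (x \in B); case: (y \in B); rewrite /= ?andbF ?andbT ?orbF.
have hirr x : Hs x x = false by rewrite /Hs /del_edges eirr.
have eAB x y : x \in A -> e x y -> y \in B.
  move=> xA exy; have := Aiso x y xA; rewrite /Hs /del_edges exy /= negbK /edge_between xA (nAB x xA) /= orbF.
  done.
have eh x y : x \notin A -> y \notin A -> e x y -> Hs x y.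
  by move=> xA yA exy; rewrite /Hs /del_edges exy /edge_between (negbTE xA) (negbTE yA) /= andbF.
have hA a y : a \in A -> Hs y a = false.
  by move=> aA; rewrite hsym; apply/negbTE/Aiso.
have uniqA b a1 a2 : b \in B -> e b a1 -> e b a2 -> a1 \in A -> a2 \in A -> a1 = a2.
  move=> bB e1 e2 a1A a2A; move/card_le1_eqP: (B1 b bB) => H.
  have m1 : a1 \in nbh e b :&: A.
    by rewrite inE in_nbh a1A andbT esym e1 andbT; apply: contraTneq e1 => ->; rewrite eirr.
  have m2 : a2 \in nbh e b :&: A.
    by rewrite inE in_nbh a2A andbT esym e2 andbT; apply: contraTneq e2 => ->; rewrite eirr.
  exact: (H a2 a1 m2 m1).
have uniqB x b1 b2 : b1 \in B -> b2 \in B -> Hs x b1 -> Hs x b2 -> b1 = b2.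
  move=> b1B b2B h1 h2; apply/eqP; apply/negP => /negP ne.
  have hp : path Hs b1 [:: x; b2] by rewrite /= hsym h1 h2.
  by have := RS2 b1 b2 b1B b2B ne [:: x; b2] hp erefl.
set S := S4 Hs.
set W := B :|: nbhs Hs B.
have inW1 x : x \in B -> x \in W by move=> xB; rewrite inE xB.
have inW2 x b : Hs x b -> b \in B -> x \in W.
  move=> hxb bB; rewrite inE; case xB: (x \in B) => //=.
  by rewrite in_nbhs xB /=; apply/exists_inP; exists b.
have WS x : x \in W -> x \in S.
  by move=> xW; case: (RS1 x xW) => /subsetP H _; apply: H; rewrite setU11.
have BS x : x \in B -> x \in S by move=> /inW1 /WS.
have nbhW x y : x \in W -> Hs y x -> y \in S.
  move=> xW hyx; case: (RS1 x xW) => /subsetP H _; apply: H.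
  by rewrite in_setU1 in_nbh hyx andbT orbN.
have B'B x : x \in B' -> x \in B /\ exists2 a, a \in A :\: A' & e x a.
  rewrite in_nbhs => /andP[_ /exists_inP[a aA exa]]; split; last by exists a.
  by apply: (eAB a); [case/setDP: aA | rewrite esym].
have AS a : a \in A -> a \notin S.
  move=> aA; apply/negP => aS; have := core_at (e := Hs) (x := a); rewrite inE aS => /(_ isT).
  suff -> : nbh Hs a :&: S = set0 by rewrite cards0.
  by apply/setP => y; rewrite in_setI in_nbh hA // andbF in_set0.
have count4W x : x \in W -> 4 <= #|nbh Hs x :&: (S :\: B')|.
  move=> xW; case: (RS1 x xW) => sub d5.
  have NS : nbh Hs x \subset S by apply: subset_trans sub; apply: subsetUr.
  have -> : nbh Hs x :&: (S :\: B') = nbh Hs x :\: B'.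
    apply/setP => y; rewrite in_setI !in_setD; case yN: (y \in nbh Hs x); rewrite /= ?andbF //.
    by rewrite (subsetP NS y yN) andbT.
  rewrite cardsD.
  have le1 : #|nbh Hs x :&: B'| <= 1.
    apply/card_le1_eqP => y1 y2; rewrite !in_setI !in_nbh => /andP[/andP[_ h1] /B'B[y1B _]] /andP[/andP[_ h2] /B'B[y2B _]].
    by apply: (uniqB x) => //; rewrite hsym.
  rewrite /deg in d5; lia.
set X := (S :\: B') :|: A'.
have inX y : (y \in X) = ((y \notin B') && (y \in S)) || (y \in A') by rewrite /X in_setU in_setD.
have inA' y : (y \in A') = (y \in A) && (4 <= deg e y) by rewrite /A' inE.
have A'A y : y \in A' -> y \in A by rewrite inA' => /andP[].
have toX x : nbh Hs x :&: (S :\: B') \subset nbh e x :&: X.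
  apply/subsetP => y; rewrite !in_setI !in_nbh inX in_setD => /andP[/andP[-> /hE ->] ->] //.
have count4W' x : x \in W -> 4 <= #|nbh e x :&: X|.
  by move=> xW; apply: leq_trans (count4W x xW) (subset_leq_card (toX x)).
have count4out x : x \notin A -> x \notin W -> x \in S :|: nbhs Hs S -> 4 <= #|nbh e x :&: X|.
  move=> xA xW xS; apply: leq_trans (core_at xS) (subset_leq_card _).
  apply/subsetP => y; rewrite !in_setI !in_nbh inX => /andP[/andP[yx hyx] yS].
  rewrite yx (hE _ _ hyx) yS /= andbT; apply/orP; left; apply: contra xW => /B'B[yB _].
  by apply: (inW2 x y) => //; rewrite hsym.
have B'notX y : y \in B' -> y \notin X.
  move=> yB'; rewrite inX yB' /=; case/B'B: yB' => yB _; apply/negP => /A'A yA.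
  by rewrite nAB in yB.
have AnA'B' a y : a \in A -> a \notin A' -> e a y -> y \in B'.
  move=> aA aA' eay; have yB := eAB a y aA eay; rewrite in_nbhs; apply/andP; split.
    by rewrite in_setD; apply/negP => /andP[_ yA]; rewrite nAB in yB.
  by apply/exists_inP; exists a; [rewrite in_setD aA aA' | rewrite esym].
have Xcore : core4_ok e X.
  apply/forall_inP => x Hx.
  case xA: (x \in A).
    have xA' : x \in A'.
      apply/negPn/negP => xA'.
      case/setUP: Hx => Hx.
        move: Hx; rewrite inX (negbTE xA') orbF => /andP[_ xS].
        by move: (AS x xA); rewrite xS.
      move: Hx; rewrite in_nbhs => /andP[_ /exists_inP[y yX exy]].
      by have := B'notX y (AnA'B' x y xA xA' exy); rewrite yX.
    have sub : nbh e x \subset X.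
      apply/subsetP => y; rewrite in_nbh => /andP[_ eyx].
      have yB : y \in B by apply: (eAB x y xA); rewrite esym.
      rewrite inX (BS y yB) andbT; apply/orP; left; apply/negP => /B'B[_ [a aAA' eya]].
      move: aAA'; rewrite in_setD => /andP[aA' aA].
      have ax : a = x by apply: (uniqA y a x yB eya) => //; rewrite esym.
      by move: aA'; rewrite ax xA'.
    by rewrite (setIidPl sub); move: xA'; rewrite inA' xA.
  case xW: (x \in W); first exact: count4W'.
  apply: count4out; rewrite ?xA ?xW //.
  case/setUP: Hx => Hx.
    move: Hx; rewrite inX => /orP[/andP[_ xS] | /A'A]; [by rewrite in_setU xS | by rewrite xA].
  move: Hx; rewrite in_nbhs => /andP[xX /exists_inP[y yX exy]].
  have yA : y \notin A.
    apply/negP => yA; have xB : x \in B by apply: (eAB y x yA); rewrite esym.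
    by rewrite (inW1 x xB) in xW.
  have yS : y \in S.
    by move: yX; rewrite inX => /orP[/andP[_ ->] // | /A'A]; rewrite (negbTE yA).
  have hxy := eh x y (negbT xA) yA exy.
  by rewrite in_setU; case xS: (x \in S) => //=; rewrite in_nbhs xS /=; apply/exists_inP; exists y.
set Y := S4 e.
have YA a : a \in A -> a \in Y :|: nbhs e Y -> a \in A'.
  move=> aA aY; rewrite inA' aA /=; apply: leq_trans (core_at aY) _.
  by rewrite /deg; apply/subset_leq_card/subsetIl.
have Zcore : core4_ok Hs ((Y :\: A) :|: S).
  apply/forall_inP => x Hx.
  case xS: (x \in S :|: nbhs Hs S).
    by apply: leq_trans (core_at xS) (subset_leq_card _); apply/setIS/subsetUr.
  move/negbT: xS; rewrite in_setU negb_or => /andP[xS xNS].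
  have [xA xY] : x \notin A /\ x \in Y :|: nbhs e Y.
    case/setUP: Hx => Hx.
      move: Hx; rewrite in_setU in_setD (negbTE xS) orbF => /andP[-> xY].
      by rewrite in_setU xY.
    move: Hx; rewrite in_nbhs => /andP[xZ /exists_inP[y yZ hxy]].
    have xA : x \notin A by apply/negP => xA; rewrite hsym hA in hxy.
    have yS : y \notin S.
      apply: contra xNS => yS; rewrite in_nbhs xS /=; apply/exists_inP; exists y => //.
    move: yZ; rewrite in_setU in_setD (negbTE yS) orbF => /andP[_ yY].
    split => //; rewrite in_setU; case xY: (x \in Y) => //=.
    rewrite in_nbhs xY /=; apply/exists_inP; exists y => //; exact: hE.
  apply: leq_trans (core_at xY) (subset_leq_card _).
  apply/subsetP => y; rewrite !in_setI !in_nbh => /andP[/andP[yx eyx] yY].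
  have yA : y \notin A.
    apply/negP => yA; have xB : x \in B by apply: (eAB y x yA).
    by rewrite (BS x xB) in xS.
  by rewrite yx (eh y x yA xA eyx) /= in_setU in_setD yA yY.
have ZS : (Y :\: A) :|: S \subset S := sub_S4 Zcore.
have YX : Y \subset X.
  apply/subsetP => y yY; rewrite inX.
  case yA: (y \in A).
    by rewrite (YA y yA) ?orbT // in_setU yY.
  have yS : y \in S by apply: (subsetP ZS); rewrite in_setU in_setD yA yY.
  rewrite yS andbT; apply/orP; left; apply/negP => /B'B[_ [a aAA' eya]].
  move: aAA'; rewrite in_setD => /andP[aA' aA].
  apply: (negP aA'); apply: YA aA _.
  case aY: (a \in Y); first by rewrite in_setU aY.
  by rewrite in_setU in_nbhs aY /=; apply/exists_inP; exists y => //; rewrite esym.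
have SX : S4 e = X by apply/eqP; rewrite eqEsubset YX sub_S4.
have B'S : B' \subset S by apply/subsetP => y /B'B[yB _]; exact: BS.
have PX : nbhs e X = nbhs Hs S :|: B'.
  apply/setP => x; apply/idP/idP.
    rewrite in_nbhs => /andP[xX /exists_inP[y yX exy]].
    rewrite in_setU; case xB': (x \in B'); rewrite ?orbT //= orbF.
    have xA : x \notin A.
      apply/negP => xA; have xA' : x \notin A' by apply: contra xX; rewrite inX => ->; rewrite orbT.
      by have := B'notX y (AnA'B' x y xA xA' exy); rewrite yX.
    have xS : x \notin S by apply: contra xX => xS; rewrite inX xS xB'.
    have yA : y \notin A.
      apply/negP => yA; have xB : x \in B by apply: (eAB y x yA); rewrite esym.
      by rewrite (BS x xB) in xS.
    have yS : y \in S by move: yX; rewrite inX => /orP[/andP[_ ->] // | /A'A]; rewrite (negbTE yA).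
    rewrite in_nbhs xS /=; apply/exists_inP; exists y => //; exact: eh.
  have fin x0 : x0 \notin X -> 4 <= #|nbh e x0 :&: X| -> x0 \in nbhs e X.
    move=> x0X H; have /card_gt0P [z] : 0 < #|nbh e x0 :&: X| by apply: leq_trans H.
    rewrite in_setI in_nbh => /andP[/andP[_ ezx] zX].
    by rewrite in_nbhs x0X /=; apply/exists_inP; exists z => //; rewrite esym.
  rewrite in_setU => /orP[xP | xB'].
    move: xP; rewrite in_nbhs => /andP[xS /exists_inP[y yS hxy]].
    have xA : x \notin A by apply/negP => xA; rewrite hsym hA in hxy.
    have xW : x \notin W by apply: contra xS; exact: WS.
    apply: fin.
      by rewrite inX (negbTE xS) andbF /=; apply: contra xA; exact: A'A.
    apply: count4out => //; rewrite in_setU in_nbhs (negbTE xS) /=.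
    by apply/exists_inP; exists y.
  apply: fin; first exact: B'notX.
  by case/B'B: xB' => xB _; apply: count4W'; exact: inW1.
split.
- exact: SX.
- by rewrite /P4 SX PX.
- by rewrite /R4 /P4 SX PX /X setR_aux.
Qed.
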